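(* Let $R=[0,1]^2$, $s\in\mathbb{N}$, $u=2^{-s}$, and let $(B_1,B_2)$ be a good box pair. If $\ell,\ell'\in\mathcal{L}$ are two lines traversing $(B_1,B_2)$, then $|\hat{\ell}-\hat{\ell'}|\le4\sqrt u$. In particular, $W=O(\sqrt u)$, where $W$ is the supremum of $|\hat{\ell_c}-\hat{\ell}|$ over all $\ell\in\mathcal{L}$ traversing $(B_1,B_2)$ and $\ell_c$ is the line through $c_1$ and $c_2$.
   Context: For $p,q\in\mathbb{R}^2$ write $p\le q$ if both coordinates satisfy $\le$. $R$ is split into $2^s\times2^s$ congruent closed squares (''boxes'') of side length $u$. A box pair is an ordered pair $(B_1,B_2)$ of boxes with centers $c_1,c_2$. Let $\mathcal{L}$ be the set of non-vertical lines in $\mathbb{R}^2$ with positive slope; each has a unit direction vector $a=(a_1,a_2)$ with positive coordinates, and its weight is $\hat{\ell}:=\min\{a_1,a_2\}$. A line $\ell\in\mathcal{L}$ traverses $(B_1,B_2)$ if it meets both boxes. A box pair is null if $c_1\not\le c_2$; close if $c_1\le c_2$ and $\|c_1-c_2\|_2<\sqrt u$; non-diagonal if $c_1\le c_2$, $\|c_1-c_2\|_2\ge\sqrt u$, and every traversing $\ell\in\mathcal{L}$ satisfies $\hat{\ell}<u^{1/5}$; good if it is neither null, close, nor non-diagonal. $O(\sqrt u)$ means bounded by an absolute constant times $\sqrt u$, uniformly over $s$ and good box pairs. *)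

(* Defs.v *)
From Stdlib Require Import Reals.
Open Scope R_scope.

Definition side (s : nat) : R := / (2 ^ s).

(* Boxes are indexed by (i,j), 0 <= i,j < 2^s; box (i,j) = [i u,(i+1)u] x [j u,(j+1)u]. *)
Definition box := (nat * nat)%type.

Definition valid_box (s : nat) (B : box) : Prop :=
  (fst B < 2 ^ s)%nat /\ (snd B < 2 ^ s)%nat.

Definition in_box (s : nat) (B : box) (q : R * R) : Prop :=
  INR (fst B) * side s <= fst q <= (INR (fst B) + 1) * side s /\
  INR (snd B) * side s <= snd q <= (INR (snd B) + 1) * side s.

Definition center (s : nat) (B : box) : R * R :=
  ((INR (fst B) + / 2) * side s, (INR (snd B) + / 2) * side s).

Definition le2 (p q : R * R) : Prop := fst p <= fst q /\ snd p <= snd q.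

Definition dist2 (p q : R * R) : R :=
  sqrt ((fst q - fst p) ^ 2 + (snd q - snd p) ^ 2).

Record line := mkLine { lpt : R * R ; ldir : R * R }.

(* Membership in the class L: non-vertical lines of positive slope, represented
   with their unit direction vector a = (a1,a2) having positive coordinates. *)
Definition in_L (l : line) : Prop :=
  0 < fst (ldir l) /\ 0 < snd (ldir l) /\
  fst (ldir l) ^ 2 + snd (ldir l) ^ 2 = 1.

Definition on_line (l : line) (q : R * R) : Prop :=
  exists t : R, q = (fst (lpt l) + t * fst (ldir l), snd (lpt l) + t * snd (ldir l)).

Definition weight (l : line) : R := Rmin (fst (ldir l)) (snd (ldir l)).

Definition meets (s : nat) (l : line) (B : box) : Prop :=
  exists q, on_line l q /\ in_box s B q.

Definition traverses (s : nat) (l : line) (B1 B2 : box) : Prop :=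
  in_L l /\ meets s l B1 /\ meets s l B2.

Definition null_pair (s : nat) (B1 B2 : box) : Prop :=
  ~ le2 (center s B1) (center s B2).

Definition close_pair (s : nat) (B1 B2 : box) : Prop :=
  le2 (center s B1) (center s B2) /\
  dist2 (center s B1) (center s B2) < sqrt (side s).

Definition nondiagonal_pair (s : nat) (B1 B2 : box) : Prop :=
  le2 (center s B1) (center s B2) /\
  dist2 (center s B1) (center s B2) >= sqrt (side s) /\
  forall l, traverses s l B1 B2 -> weight l < Rpower (side s) (1 / 5).

Definition good_pair (s : nat) (B1 B2 : box) : Prop :=
  valid_box s B1 /\ valid_box s B2 /\
  ~ null_pair s B1 B2 /\ ~ close_pair s B1 B2 /\ ~ nondiagonal_pair s B1 B2.

(* Weight of the line l_c through c1 and c2: min of the coordinates of the unit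
   vector (c2 - c1)/|c2 - c1| (c1 <= c2, c1 <> c2 for a good pair). *)
Definition center_weight (s : nat) (B1 B2 : box) : R :=
  let c1 := center s B1 in let c2 := center s B2 in
  let d := dist2 c1 c2 in
  Rmin ((fst c2 - fst c1) / d) ((snd c2 - snd c1) / d).

(* Main.v *)
Require Import Defs.
From Stdlib Require Import Reals Lra Psatz Classical.
Open Scope R_scope.

Lemma key (u a1 a2 d1 d2 e1 e2 t D : R) :
  0 < u -> 0 < a1 -> 0 < a2 -> a1^2 + a2^2 = 1 -> 0 <= d1 -> 0 <= d2 ->
  0 < D -> D * D = d1^2 + d2^2 -> u <= D * D ->
  Rabs e1 <= u -> Rabs e2 <= u -> d1 + e1 = t * a1 -> d2 + e2 = t * a2 ->
  (a1 - d1 / D)^2 + (a2 - d2 / D)^2 <= 4 * u.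
Proof.
  intros Hu Ha1 Ha2 Ha Hd1 Hd2 HD HDD HuD He1 He2 Ht1 Ht2.
  set (P := a1 * d1 + a2 * d2).
  set (C := a1 * d2 - a2 * d1).
  assert (HL : P * P + C * C = D * D) by (unfold P, C; rewrite HDD; nra).
  assert (HP0 : 0 <= P) by (unfold P; nra).
  assert (HPD : P <= D) by nra.
  assert (HC : C = a2 * e1 - a1 * e2).
  { unfold C. replace d1 with (t*a1 - e1) by lra. replace d2 with (t*a2 - e2) by lra. ring. }
  assert (He1' : e1 * e1 <= u * u) by (unfold Rabs in He1; destruct (Rcase_abs e1); nra).
  assert (He2' : e2 * e2 <= u * u) by (unfold Rabs in He2; destruct (Rcase_abs e2); nra).
  assert (HCC : C * C <= 2 * (u * u)).
  { rewrite HC. assert (0 <= (a1*e1 + a2*e2)^2) by apply pow2_ge_0.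
    assert ((a2 * e1 - a1 * e2) * (a2 * e1 - a1 * e2) + (a1*e1+a2*e2)^2 = (a1^2+a2^2)*(e1*e1+e2*e2)) by ring.
    rewrite Ha in H0. nra. }
  assert (Eq : (a1 - d1 / D)^2 + (a2 - d2 / D)^2 = 2 - 2 * P / D).
  { assert (E0 : (a1 - d1 / D)^2 + (a2 - d2 / D)^2 = (a1^2+a2^2) - 2*P/D + (d1^2+d2^2)/(D*D)) by (unfold P; field; lra).
    rewrite E0, Ha, <- HDD. field. lra. }
  rewrite Eq.
  assert (H1 : (D - P) * (D * D) <= C * C * D) by (assert (0 <= (D-P)*P*D) by (apply Rmult_le_pos; [apply Rmult_le_pos|]; lra); nra).
  assert (H2 : C * C * D <= 2 * (u*u) * D) by nra.
  assert (H3 : 2 * (u * u) * D <= 2 * u * (D * D) * D) by (assert (H3a := Rmult_le_compat_l (2*u*D) u (D*D) ltac:(nra) HuD); nra).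
  assert (H4 : (D - P) * (D*D) <= 2 * u * (D*D) * D) by lra.
  assert (H5 : D - P <= 2 * u * D).
  { apply Rmult_le_reg_r with (D*D); nra. }
  apply Rmult_le_reg_r with D; [lra|].
  field_simplify; lra.
Qed.

Lemma sq_abs (z k : R) : 0 <= k -> z^2 <= k^2 -> Rabs z <= k.
Proof. intros Hk H. unfold Rabs; destruct (Rcase_abs z); nra. Qed.

Lemma min_lip (x1 x2 y1 y2 u : R) : 0 < u ->
  (x1-y1)^2 + (x2-y2)^2 <= 4*u -> Rabs (Rmin x1 x2 - Rmin y1 y2) <= 2 * sqrt u.
Proof.
  intros Hu H.
  assert (Hs : (2 * sqrt u)^2 = 4 * u) by (rewrite Rpow_mult_distr, pow2_sqrt; lra).
  assert (0 <= sqrt u) by apply sqrt_pos.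
  assert (A1 : Rabs (x1 - y1) <= 2 * sqrt u) by (apply sq_abs; [lra| rewrite Hs; assert (0 <= (x2-y2)^2) by apply pow2_ge_0; lra]).
  assert (A2 : Rabs (x2 - y2) <= 2 * sqrt u) by (apply sq_abs; [lra| rewrite Hs; assert (0 <= (x1-y1)^2) by apply pow2_ge_0; lra]).
  revert A1 A2. unfold Rmin, Rabs. destruct (Rle_dec x1 x2), (Rle_dec y1 y2);
  repeat destruct (Rcase_abs _); lra.
Qed.

Lemma side_pos s : 0 < side s.
Proof. unfold side. apply Rinv_0_lt_compat, pow_lt; lra. Qed.

Lemma box_err s B q : in_box s B q ->
  Rabs (fst q - fst (center s B)) <= side s / 2 /\ Rabs (snd q - snd (center s B)) <= side s / 2.
Proof.
  unfold in_box, center; simpl. intros [[A B'] [C D]]. split; apply Rabs_le; lra.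
Qed.

Lemma aw s B1 B2 l : good_pair s B1 B2 -> traverses s l B1 B2 ->
  Rabs (center_weight s B1 B2 - weight l) <= 2 * sqrt (side s).
Proof.
  intros [_ [_ [Hnn [Hnc _]]]] [[Ha1 [Ha2 Ha]] [[q1 [[t1 Hq1] Hb1]] [q2 [[t2 Hq2] Hb2]]]].
  assert (Hle : le2 (center s B1) (center s B2)) by (apply NNPP; exact Hnn).
  assert (Hu := side_pos s).
  set (u := side s) in *.
  set (c1 := center s B1) in *. set (c2 := center s B2) in *.
  set (d1 := fst c2 - fst c1). set (d2 := snd c2 - snd c1).
  set (D := dist2 c1 c2).
  assert (HD : sqrt u <= D).
  { destruct (Rlt_or_le D (sqrt u)) as [h|h]; [exfalso; apply Hnc; split; assumption | exact h]. }
  assert (Hsu : 0 < sqrt u) by (apply sqrt_lt_R0; lra).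
  assert (HDD : D * D = d1^2 + d2^2).
  { unfold D, dist2. apply sqrt_sqrt. assert (0 <= d1^2) by apply pow2_ge_0. assert (0 <= d2^2) by apply pow2_ge_0. lra. }
  assert (HuD : u <= D * D).
  { rewrite <- (sqrt_sqrt u) by lra. apply Rmult_le_compat; lra. }
  destruct Hle as [Hx Hy].
  destruct (box_err _ _ _ Hb1) as [E1 E2].
  destruct (box_err _ _ _ Hb2) as [E3 E4].
  fold c1 c2 u in E1, E2, E3, E4.
  rewrite Rabs_minus_sym.
  unfold center_weight, weight. fold c1 c2 D. fold d1 d2.
  apply min_lip; [exact Hu|].
  apply (key u _ _ d1 d2 ((fst q2 - fst c2) - (fst q1 - fst c1)) ((snd q2 - snd c2) - (snd q1 - snd c1)) (t2 - t1) D); try assumption; try (unfold d1, d2; lra).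
  - eapply Rle_trans; [apply Rabs_triang|]. rewrite Rabs_Ropp. lra.
  - eapply Rle_trans; [apply Rabs_triang|]. rewrite Rabs_Ropp. lra.
  - rewrite Hq1, Hq2 in *. unfold d1. simpl. ring.
  - rewrite Hq1, Hq2 in *. unfold d2. simpl. ring.
Qed.

Theorem lemma8 :
  (forall (s : nat) (B1 B2 : box), good_pair s B1 B2 ->
     forall l l' : line, traverses s l B1 B2 -> traverses s l' B1 B2 ->
       Rabs (weight l - weight l') <= 4 * sqrt (side s))
  /\
  (exists C : R, forall (s : nat) (B1 B2 : box), good_pair s B1 B2 ->
     forall l : line, traverses s l B1 B2 ->
       Rabs (center_weight s B1 B2 - weight l) <= C * sqrt (side s)).
Proof.
  split.
  - intros s B1 B2 G l l' T T'.
    assert (A := aw _ _ _ _ G T). assert (A' := aw _ _ _ _ G T').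
    replace (weight l - weight l') with (-(center_weight s B1 B2 - weight l) + (center_weight s B1 B2 - weight l')) by ring.
    eapply Rle_trans; [apply Rabs_triang|]. rewrite Rabs_Ropp. lra.
  - exists 2. intros s B1 B2 G l T. exact (aw _ _ _ _ G T).
Qed.
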